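(* Let $f,g_1,\dots,g_m$, $\phi$, $\psi$ be as in the context, and consider the HMCP: find $\hat x=\mathrm{col}(\bar x,\tau)\ge0$, $\hat s=\mathrm{col}(\bar s,\kappa)\ge 0$ with $\hat s=\psi(\hat x)$ and $\hat s\odot\hat x=0$. Then the HMCP is always asymptotically feasible. Furthermore, every asymptotically feasible solution of the HMCP is an asymptotically complementary solution.
   Context: $f,g_1,\dots,g_m:\mathbb{R}^n\to\mathbb{R}$ are twice continuously differentiable convex functions on $\mathbb{R}^n_+$, $g=\mathrm{col}(g_1,\dots,g_m)$, $\bar n=n+m$, $\phi:\mathbb{R}^{\bar n}_+\to\mathbb{R}^{\bar n}$, $\phi(x,y)=\mathrm{col}\big(\nabla f(x)+\sum_{i=1}^m y_i\nabla g_i(x),\ -g(x)\big)$, and $\psi:\mathbb{R}^{\bar n+1}_{++}\to\mathbb{R}^{\bar n+1}$, $\psi(\bar x,\tau)=\mathrm{col}\big(\tau\phi(\bar x/\tau),\ -\bar x^\top\phi(\bar x/\tau)\big)$; $\odot$ is the componentwise product. The HMCP is asymptotically feasible if there exist positive bounded $(\bar x^t,\tau^t,\bar s^t,\kappa^t)>0$, $t>0$, such that $\mathrm{col}(\bar s^t,\kappa^t)-\psi(\bar x^t,\tau^t)\to 0$ as $t\to\infty$; such a family is an asymptotically feasible solution. An asymptotically feasible solution with $(\bar x^t)^\top\bar s^t+\tau^t\kappa^t=0$ is called an asymptotically complementary solution. *)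

(* Defs.v *)
From HB Require Import structures.
From mathcomp Require Import all_boot all_order all_algebra.
From mathcomp Require Import all_classical all_reals all_analysis.
Set Implicit Arguments. Unset Strict Implicit. Unset Printing Implicit Defensive.
Import Order.TTheory GRing.Theory Num.Theory.
Import numFieldNormedType.Exports.
Local Open Scope ring_scope.
Local Open Scope classical_set_scope.

Definition partial {R : realType} {n : nat} (h : 'rV[R]_n -> R) (j : 'I_n)
  : 'rV[R]_n -> R := fun x => 'D_(delta_mx 0 j) h x.

Definition grad {R : realType} {n : nat} (h : 'rV[R]_n -> R) (x : 'rV[R]_n)
  : 'rV[R]_n := \row_j partial h j x.

Definition C2 {R : realType} {n : nat} (h : 'rV[R]_n -> R) : Prop :=
  (forall x, differentiable h x) /\
  (forall j x, differentiable (partial h j) x) /\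
  (forall j k, continuous (partial (partial h j) k)).

Definition convex_on_orthant {R : realType} {n : nat} (h : 'rV[R]_n -> R) : Prop :=
  forall (x y : 'rV[R]_n) (l : R),
    (forall j, 0 <= x 0 j) -> (forall j, 0 <= y 0 j) -> 0 <= l <= 1 ->
    h (l *: x + (1 - l) *: y) <= l * h x + (1 - l) * h y.

Definition dotv {R : realType} {k : nat} (u v : 'rV[R]_k) : R :=
  \sum_(j < k) u 0 j * v 0 j.

(* phi(x,y) = col(grad f x + sum_i y_i grad g_i x, - g(x)), with the variable
   xb = col(x,y) in R^(n+m) *)
Definition phi {R : realType} {n m : nat} (f : 'rV[R]_n -> R)
  (g : 'I_m -> 'rV[R]_n -> R) (xb : 'rV[R]_(n + m)) : 'rV[R]_(n + m) :=
  let x := lsubmx xb in let y := rsubmx xb in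
  row_mx (grad f x + \sum_(i < m) y 0 i *: grad (g i) x)
         (- \row_i g i x).

(* psi(xb, tau) = col(tau phi(xb/tau), - xb^T phi(xb/tau)), as a pair *)
Definition psi {R : realType} {n m : nat} (f : 'rV[R]_n -> R)
  (g : 'I_m -> 'rV[R]_n -> R) (xb : 'rV[R]_(n + m)) (tau : R)
  : 'rV[R]_(n + m) * R :=
  (tau *: phi f g (tau^-1 *: xb), - dotv xb (phi f g (tau^-1 *: xb))).

Definition asympt_feasible {R : realType} {n m : nat} (f : 'rV[R]_n -> R)
  (g : 'I_m -> 'rV[R]_n -> R)
  (xb : R -> 'rV[R]_(n + m)) (tau : R -> R)
  (sb : R -> 'rV[R]_(n + m)) (kappa : R -> R) : Prop :=
  (forall t, 0 < t ->
     (forall j, 0 < xb t 0 j) /\ 0 < tau t /\ (forall j, 0 < sb t 0 j) /\ 0 < kappa t) /\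
  (exists M : R, forall t, 0 < t ->
     (forall j, `|xb t 0 j| <= M) /\ `|tau t| <= M /\
     (forall j, `|sb t 0 j| <= M) /\ `|kappa t| <= M) /\
  (fun t => sb t - (psi f g (xb t) (tau t)).1) @ +oo --> (0 : 'rV[R]_(n + m)) /\
  (fun t => kappa t - (psi f g (xb t) (tau t)).2) @ +oo --> (0 : R).

Definition asympt_complementary {R : realType} {n m : nat} (f : 'rV[R]_n -> R)
  (g : 'I_m -> 'rV[R]_n -> R)
  (xb : R -> 'rV[R]_(n + m)) (tau : R -> R)
  (sb : R -> 'rV[R]_(n + m)) (kappa : R -> R) : Prop :=
  asympt_feasible f g xb tau sb kappa /\
  (fun t => dotv (xb t) (sb t) + tau t * kappa t) @ +oo --> (0 : R).

(* Main.v *)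
Require Import Defs.
From HB Require Import structures.
From mathcomp Require Import all_boot all_order all_algebra.
From mathcomp Require Import all_classical all_reals all_analysis.
From mathcomp Require Import ring.
Import Order.TTheory GRing.Theory Num.Theory.
Import numFieldNormedType.Exports.
Local Open Scope ring_scope.
Local Open Scope classical_set_scope.
Lemma s_cvg0 (R : realType) : (fun t : R => (1 + `|t|)^-1) @ +oo --> (0:R).
Proof.
apply/cvgr0Pnorm_lt => e e0.
near=> t.
have t0 : 0 < 1 + `|t| by rewrite ltr_pwDl.
rewrite ger0_norm ?invr_ge0 ?ltW //.
rewrite invf_plt ?posrE //.
rewrite (lt_le_trans _ (ler_wpDl (ler01) (ler_norm t))) //.
near: t; apply: nbhs_pinfty_gt; exact: num_real.
Unshelve. all: end_near. Qed.

Lemma mx_entry_le (R : realType) k (A : 'rV[R]_k) j : `|A 0 j| <= `|A|.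
Proof.
rewrite -[`|A|]/(mx_norm A) mx_normrE.
exact: (@le_bigmax _ _ _ 0 (fun ij : 'I_1 * 'I_k => `|A ij.1 ij.2|) (0, j)).
Qed.

Lemma dotvZr (R : realType) k (x u : 'rV[R]_k) a : dotv x (a *: u) = a * dotv x u.
Proof.
rewrite /dotv mulr_sumr; apply: eq_bigr => j _; rewrite mxE.
by rewrite mulrA [x 0 j * a]mulrC mulrA.
Qed.

Lemma dotvZl (R : realType) k (x u : 'rV[R]_k) a : dotv (a *: x) u = a * dotv x u.
Proof.
rewrite /dotv mulr_sumr; apply: eq_bigr => j _; rewrite mxE.
by rewrite mulrA.
Qed.

Lemma dotvDr (R : realType) k (x u v : 'rV[R]_k) : dotv x (u + v) = dotv x u + dotv x v.
Proof.
rewrite /dotv -big_split /=; apply: eq_bigr => j _; rewrite mxE.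
by rewrite mulrDr.
Qed.

Theorem lemma8 (R : realType) (n m : nat) (f : 'rV[R]_n -> R)
  (g : 'I_m -> 'rV[R]_n -> R)
  (Cf : C2 f) (Cg : forall i, C2 (g i))
  (convf : convex_on_orthant f) (convg : forall i, convex_on_orthant (g i)) :
  (exists (xb : R -> 'rV[R]_(n + m)) (tau : R -> R)
          (sb : R -> 'rV[R]_(n + m)) (kappa : R -> R),
      asympt_feasible f g xb tau sb kappa) /\
  (forall (xb : R -> 'rV[R]_(n + m)) (tau : R -> R)
          (sb : R -> 'rV[R]_(n + m)) (kappa : R -> R),
      asympt_feasible f g xb tau sb kappa ->
      asympt_complementary f g xb tau sb kappa).
Proof.
split.
  pose s := fun t : R => (1 + `|t|)^-1.
  have s0 t : 0 < s t by rewrite /s invr_gt0 ltr_pwDl.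
  have s1 t : `|s t| <= 1.
    rewrite ger0_norm; last exact: ltW.
    rewrite /s invf_le1 ?ltr_pwDl // lerDl.
    exact: normr_ge0.
  pose z : 'rV[R]_(n + m) := const_mx 1.
  have ez t : (s t)^-1 *: (s t *: z) = z.
    by rewrite scalerA mulVf ?scale1r // gt_eqF.
  exists (fun t => s t *: z), s, (fun t => s t *: z), s.
  split; [|split; [|split]].
  - move=> t _; split; [|split; [|split]] => //= [j|j]; by rewrite !mxE mulr1.
  - exists 1 => t _; split; [|split; [|split]] => // [j|j]; by rewrite !mxE mulr1.
  - have -> : (fun t => s t *: z - (psi f g (s t *: z) (s t)).1) =
              (fun t => s t *: (z - phi f g z)).
      by apply/funext => t; rewrite /psi /= ez scalerBr.
    rewrite -[X in _ --> X](scale0r (z - phi f g z)).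
    apply: cvgZ; [exact: s_cvg0 | exact: cvg_cst].
  - have -> : (fun t => s t - (psi f g (s t *: z) (s t)).2) =
              (fun t => s t *: (1 + dotv z (phi f g z))).
      by apply/funext => t; rewrite /psi /= ez dotvZl opprK /GRing.scale /= mulrDr mulr1.
    rewrite -[X in _ --> X](scale0r (1 + dotv z (phi f g z))).
    apply: cvgZ; [exact: s_cvg0 | exact: cvg_cst].
move=> xb tau sb kappa H; split => //.
case: H => pos [[M HM] [cs ck]].
set d := fun t => sb t - (psi f g (xb t) (tau t)).1 in cs.
set e := fun t => kappa t - (psi f g (xb t) (tau t)).2 in ck.
have M0 : 0 <= M by case: (HM 1 ltr01) => _ [+ _]; apply: le_trans.
have idt t : dotv (xb t) (sb t) + tau t * kappa t = dotv (xb t) (d t) + tau t * e t.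
  rewrite /d /e /psi /= dotvDr.
  have -> : dotv (xb t) (- (tau t *: phi f g ((tau t)^-1 *: xb t))) =
            - (tau t * dotv (xb t) (phi f g ((tau t)^-1 *: xb t))).
    by rewrite -scaleNr dotvZr mulNr.
  by rewrite opprK; ring.
pose N : R := (n + m)%:R.
pose G := fun t => M * (N * `|d t| + `|e t|).
have bnd t : 0 < t -> `|dotv (xb t) (sb t) + tau t * kappa t| <= G t.
  move=> t0; rewrite idt /G [X in _ <= X]mulrDr.
  case: (HM t t0) => Hx [Ht _].
  apply: (le_trans (ler_normD _ _)); apply: lerD; last first.
    by rewrite normrM ler_wpM2r.
  rewrite /dotv; apply: (le_trans (ler_norm_sum _ _ _)).
  apply: (@le_trans _ _ (\sum_(j < n + m) M * `|d t|)).
    apply: ler_sum => j _; rewrite normrM; apply: ler_pM => //.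
    exact: mx_entry_le.
  by rewrite sumr_const card_ord /N -mulrnAr -mulr_natl.
have h1 : `|d x| @[x --> +oo] --> (0:R) by apply/norm_cvg0P.
have h2 : `|e x| @[x --> +oo] --> (0:R) by apply/norm_cvg0P.
have h4 : G x @[x --> +oo] --> (0:R).
  have -> : (0:R) = M * (N * 0 + 0) by rewrite mulr0 addr0 mulr0.
  apply: cvgM; first exact: cvg_cst.
  apply: cvgD; last exact: h2.
  apply: cvgM; [exact: cvg_cst | exact: h1].
apply/norm_cvg0P.
apply: (@squeeze_cvgr _ _ _ _ (fun _ => 0) G).
- near=> t; rewrite normr_ge0 /=; apply: bnd.
  near: t; apply: nbhs_pinfty_gt; exact: num_real.
- exact: cvg_cst.
- exact: h4.
Unshelve. all: end_near. Qed.
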